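(* Let $\mathsf{X}\subset\mathbb{R}^d$ be compact, contained in the ball of radius $R$ centered at the origin, and $\alpha,\beta\in\mathcal{M}_+(\mathsf{X})$. Let $p\in[1,+\infty)$, $\mathrm{C}_1(x,y)=|x-y|^p$ on $\mathbb{R}$ and $\mathrm{C}_d(x,y)=\|x-y\|^p$ on $\mathbb{R}^d$. Then $\mathrm{USOT}(\alpha,\beta)\le\mathrm{UOT}(\alpha,\beta)$.
   Context: Fix entropy functions $\varphi_1,\varphi_2$ (convex, l.s.c., domain in $[0,\infty)$, $\varphi(1)=0$); $\mathrm{D}_\varphi(\mu|\nu)=\int\varphi(\frac{d\mu}{d\nu})d\nu+\varphi'_\infty\mu^\perp(\mathbb{R}^s)$. On $\mathbb{R}^d$, $\mathrm{UOT}(\alpha,\beta)=\inf_{\pi\in\mathcal{M}_+(\mathbb{R}^d\times\mathbb{R}^d)}\int\mathrm{C}_dd\pi+\mathrm{D}_{\varphi_1}(\pi_1|\alpha)+\mathrm{D}_{\varphi_2}(\pi_2|\beta)$ ($\pi_1,\pi_2$ marginals). $\mathrm{OT}$ denotes balanced OT with cost $\mathrm{C}_1$ on $\mathbb{R}$. With $\boldsymbol\sigma$ uniform on $\mathbb{S}^{d-1}$, $\theta^\star(x)=\langle\theta,x\rangle$: $\mathrm{SOT}(\pi_1,\pi_2)=\int\mathrm{OT}(\theta^\star_\sharp\pi_1,\theta^\star_\sharp\pi_2)d\boldsymbol\sigma$ and $\mathrm{USOT}(\alpha,\beta)=\inf_{\pi_1,\pi_2\in\mathcal{M}_+(\mathbb{R}^d)}\mathrm{SOT}(\pi_1,\pi_2)+\mathrm{D}_{\varphi_1}(\pi_1|\alpha)+\mathrm{D}_{\varphi_2}(\pi_2|\beta)$.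 *)

(* Defs.v *)
From HB Require Import structures.
From mathcomp Require Import all_boot all_order all_algebra.
From mathcomp Require Import all_classical all_reals all_analysis.
Set Implicit Arguments. Unset Strict Implicit. Unset Printing Implicit Defensive.
Import Order.TTheory GRing.Theory Num.Theory.
Import numFieldNormedType.Exports.
Local Open Scope classical_set_scope.
Local Open Scope ring_scope.

(* R^d, represented by row vectors 'rV[R]_d, with its Borel sigma-algebra
   (the sigma-algebra generated by the open sets; the topology of 'rV[R]_d
   is the usual one on R^d). *)
Definition Rd (R : realType) (d : nat) :=
  g_sigma_algebraType (@open 'rV[R]_d).

Definition dotp (R : realType) (d : nat) (x y : 'rV[R]_d) : R :=
  \sum_(i < d) x ord0 i * y ord0 i.
Definition enorm (R : realType) (d : nat) (x : 'rV[R]_d) : R :=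
  Num.sqrt (dotp x x).

Definition sphere (R : realType) (d : nat) : set 'rV[R]_d :=
  [set x | enorm x = 1].

Definition orthogonal_mx (R : realType) (d : nat) (Q : 'M[R]_d) : Prop :=
  Q *m Q^T = 1%:M.

(* Uniform probability measure on S^{d-1}: a Borel probability measure on R^d
   concentrated on the sphere and invariant under all orthogonal maps
   (this characterises the normalised surface measure uniquely). *)
Definition uniform_on_sphere (R : realType) (d : nat)
    (sigma : probability (Rd R d) R) : Prop :=
  sigma (~` (@sphere R d : set (Rd R d))) = 0%E /\
  forall (Q : 'M[R]_d), orthogonal_mx Q ->
    forall A : set (Rd R d), measurable A ->
      sigma ((fun x : Rd R d => (x *m Q : Rd R d)) @^-1` A) = sigma A.

(* Entropy functions: convex, lower semicontinuous, proper (never -oo),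
   domain contained in [0, +oo), phi 1 = 0.  Values outside the domain
   are +oo. *)
Definition entropy_function (R : realType) (phi : R -> \bar R) : Prop :=
  (forall (x y t : R), 0 <= t <= 1 ->
     (phi (t * x + (1 - t) * y)%R <= t%:E * phi x + (1 - t)%R%:E * phi y)%E) /\
  lower_semicontinuous phi /\
  (forall x, phi x != -oo%E) /\
  (forall x, x < 0 -> phi x = +oo%E) /\
  phi 1 = 0%E.

Definition recession (R : realType) (phi : R -> \bar R) : \bar R :=
  lim ((fun s : R => (phi s * (s^-1)%:E)%E) @ +oo).

(* Csiszar phi-divergence D_phi(mu | nu) = \int phi(d mu_ac / d nu) d nu
   + phi'_oo * mu^perp(whole space), where mu = (f nu) + mu^perp is the
   Lebesgue decomposition of mu w.r.t. nu: mu^perp is mu restricted to a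
   nu-null measurable set N, and f >= 0 is a density of the remaining part.
   For finite measures this decomposition is unique (f nu-a.e., mu^perp),
   so the value below (an infimum over all such decompositions, which all
   give the same value) is exactly D_phi(mu | nu).  mu is taken as a set
   function so that it can be a marginal / pushforward. *)
Definition divergence (dT : measure_display) (T : measurableType dT)
    (R : realType) (phi : R -> \bar R)
    (mu : set T -> \bar R) (nu : {measure set T -> \bar R}) : \bar R :=
  ereal_inf [set v | exists (f : T -> R) (N : set T),
    [/\ measurable_fun setT f /\ (forall x, 0 <= f x), measurable N,
        nu N = 0%E,
        (forall A, measurable A ->
            mu A = (\int[nu]_(x in A `\` N) (f x)%:E + mu (A `&` N))%E) &
        v = (\int[nu]_x phi (f x) + recession phi * mu N)%E]].

(* Balanced OT on R with cost |x - y|^p between two (set functions of)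
   finite measures: infimum over couplings; +oo if there is none. *)
Definition OT1 (R : realType) (p : R) (m1 m2 : set R -> \bar R) : \bar R :=
  ereal_inf [set v | exists gamma : {finite_measure set (R * R)%type -> \bar R},
    (forall A : set R, measurable A ->
        gamma (A `*` setT) = m1 A /\ gamma (setT `*` A) = m2 A) /\
    v = (\int[gamma]_z ((`|z.1 - z.2|) `^ p)%:E)%E].

Definition proj_push (R : realType) (d : nat) (theta : 'rV[R]_d)
    (mu : set (Rd R d) -> \bar R) : set R -> \bar R :=
  fun A => mu ((fun x : Rd R d => dotp theta x) @^-1` A).

Definition SOT (R : realType) (d : nat) (p : R)
    (sigma : {measure set (Rd R d) -> \bar R})
    (pi1 pi2 : set (Rd R d) -> \bar R) : \bar R :=
  (\int[sigma]_theta OT1 p (proj_push theta pi1) (proj_push theta pi2))%E.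

Definition USOT (R : realType) (d : nat) (p : R)
    (sigma : {measure set (Rd R d) -> \bar R})
    (phi1 phi2 : R -> \bar R) (alpha beta : {measure set (Rd R d) -> \bar R})
    : \bar R :=
  ereal_inf [set v | exists pi1 pi2 : {finite_measure set (Rd R d) -> \bar R},
    v = (SOT p sigma pi1 pi2 + divergence phi1 pi1 alpha
         + divergence phi2 pi2 beta)%E].

Definition UOT (R : realType) (d : nat) (p : R)
    (phi1 phi2 : R -> \bar R) (alpha beta : {measure set (Rd R d) -> \bar R})
    : \bar R :=
  ereal_inf [set v | exists pi : {finite_measure set (Rd R d * Rd R d)%type -> \bar R},
    v = (\int[pi]_z ((enorm (z.1 - z.2)) `^ p)%:E
         + divergence phi1 (fun A => pi (A `*` setT)) alpha
         + divergence phi2 (fun A => pi (setT `*` A)) beta)%E].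

(* Main.v *)
Require Import Defs.
From HB Require Import structures.
From mathcomp Require Import all_boot all_order all_algebra.
From mathcomp Require Import all_classical all_reals all_analysis.
From mathcomp Require Import measurable_realfun.
From mathcomp Require Import lra.
Import Order.TTheory GRing.Theory Num.Theory.
Import numFieldNormedType.Exports.
Local Open Scope classical_set_scope.
Local Open Scope ring_scope.

Lemma dotpB (R : realType) (d : nat) (t x y : 'rV[R]_d) :
  dotp t x - dotp t y = dotp t (x - y).
Proof.
rewrite /dotp -sumrB; apply: eq_bigr => i _; rewrite !mxE; lra.
Qed.

Lemma dotp_ge0 (R : realType) (d : nat) (x : 'rV[R]_d) : 0 <= dotp x x.
Proof. by rewrite /dotp; apply: sumr_ge0 => i _; rewrite -expr2 sqr_ge0. Qed.
Arguments dotp_ge0 {R d} x.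

Lemma cs_sphere (R : realType) (d : nat) (t w : 'rV[R]_d) :
  enorm t = 1 -> `|dotp t w| <= enorm w.
Proof.
move=> ht.
have tt1 : dotp t t = 1.
  by rewrite -(sqr_sqrtr (dotp_ge0 t)) -/(enorm t) ht expr1n.
have hb : enorm w ^+ 2 = dotp w w by rewrite sqr_sqrtr // dotp_ge0.
have b0 : 0 <= enorm w by exact: sqrtr_ge0.
have key : forall s : R, s ^+ 2 = 1 -> s * dotp t w <= enorm w.
  move=> s s1.
  have [bz|bp] := eqVneq (enorm w) 0.
    have ww : dotp w w = 0 by rewrite -hb bz expr0n.
    have wi : forall i, w ord0 i = 0.
      move=> i; have := @psumr_eq0P R _ xpredT (fun i => w ord0 i * w ord0 i)
        (fun i _ => sqr_ge0 (w ord0 i)) ww i isT.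
      by move/eqP; rewrite mulf_eq0 orbb => /eqP.
    rewrite bz /dotp big1 ?mulr0 // => i _; by rewrite wi mulr0.
  have bpos : 0 < enorm w by rewrite lt_def bp b0.
  have H : 2 * enorm w * (s * dotp t w) <= enorm w ^+ 2 * dotp t t + dotp w w.
    rewrite /dotp !mulr_sumr -big_split /=.
    apply: ler_sum => i _.
    have h1 := sqr_ge0 (enorm w * t ord0 i - s * w ord0 i).
    have h2 : s * s * (w ord0 i * w ord0 i) = w ord0 i * w ord0 i.
      by rewrite -expr2 s1 mul1r.
    nra.
  rewrite tt1 mulr1 -hb in H.
  have : enorm w * (s * dotp t w) <= enorm w * enorm w by nra.
  by rewrite ler_pM2l.
rewrite ler_norml; apply/andP; split.
  by rewrite lerNl -mulN1r; apply: key; rewrite sqrrN expr1n.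
by rewrite -[dotp t w]mul1r; apply: key; rewrite expr1n.
Qed.
Lemma meas_coord (R : realType) (d : nat) (i : 'I_d) :
  measurable_fun setT (fun x : Rd R d => x ord0 i).
Proof.
apply: (measurability _ (measurable_realfun.RGenOpens.measurableE R)).
move=> _ [_ [a [b ->]] <-]; rewrite setTI.
apply: sub_sigma_algebra.
apply: (@open_comp _ _ (fun x : 'rV[R]_d => x ord0 i)).
  by move=> x _; exact: coord_continuous.
exact: interval_open.
Qed.

Lemma meas_dotp (R : realType) (d : nat) (t : 'rV[R]_d) :
  measurable_fun setT (fun x : Rd R d => dotp t x).
Proof.
rewrite /dotp; apply: measurable_sum => i.
apply: measurable_funM => //; exact: meas_coord.
Qed.

Lemma meas_dotpxx (R : realType) (d : nat) :
  measurable_fun setT (fun x : Rd R d => dotp x x).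
Proof.
rewrite /dotp; apply: measurable_sum => i.
apply: measurable_funM => //; exact: meas_coord.
Qed.

Lemma meas_sphere (R : realType) (d : nat) : measurable (@sphere R d : set (Rd R d)).
Proof.
have mf : measurable_fun setT (fun x : Rd R d => enorm x).
  rewrite /enorm; apply: measurableT_comp (meas_dotpxx R d).
  exact: continuous_measurable_fun (@sqrt_continuous R).
have := mf measurableT _ (measurable_set1 1).
by rewrite setTI.
Qed.
Section fpush.
Local Open Scope ereal_scope.
Context d1 d2 (T1 : measurableType d1) (T2 : measurableType d2) (R : realType)
 (m : {finite_measure set T1 -> \bar R}) (f : T1 -> T2) (mf : measurable_fun setT f).
Definition fpush := let _ := mf in fun A => m (f @^-1` A).

Let fpush0 : fpush set0 = 0.
Proof. by rewrite /fpush preimage_set0 measure0. Qed.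

Let fpush_ge0 A : 0 <= fpush A.
Proof. by apply: measure_ge0; rewrite -[X in measurable X]setIT; apply: mf. Qed.

Let fpush_sigma_additive : semi_sigma_additive fpush.
Proof.
move=> F mF tF mUF; rewrite /fpush preimage_bigcup.
apply: measure_semi_sigma_additive.
- by move=> n; rewrite -[X in measurable X]setTI; exact: mf.
- apply/trivIsetP => /= i j _ _ ij; rewrite -preimage_setI.
  by move/trivIsetP : tF => /(_ _ _ _ _ ij) ->//; rewrite preimage_set0.
- by rewrite -preimage_bigcup -[X in measurable X]setTI; exact: mf.
Qed.

HB.instance Definition _ := isMeasure.Build _ _ _
  fpush fpush0 fpush_ge0 fpush_sigma_additive.

Let fpush_fin : fin_num_fun fpush.
Proof.
move=> A mA; rewrite /fpush; apply: fin_num_measure.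
by rewrite -[X in measurable X]setTI; exact: mf.
Qed.

HB.instance Definition _ := Measure_isFinite.Build _ _ _ fpush fpush_fin.
End fpush.
Arguments fpush {d1 d2 T1 T2 R} m {f} mf.
Section intlem.
Import HBNNSimple.
Local Open Scope ereal_scope.
Context d (T : measurableType d) (R : realType) (mu : {measure set T -> \bar R}).

Lemma le_int_any (f g : T -> \bar R) : (forall x, 0 <= f x) ->
  (forall x, f x <= g x) -> \int[mu]_x f x <= \int[mu]_x g x.
Proof.
move=> f0 fg; rewrite !ge0_integralTE//; last by move=> x; exact: le_trans (f0 x) (fg x).
apply: le_ereal_sup => _ [h hf <-]; exists h => // x; exact: le_trans (hf x) (fg x).
Qed.

Lemma ae_le_cst (f : T -> \bar R) (N : set T) (c : R) : (forall x, 0 <= f x) ->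
  measurable N -> mu N = 0 -> (0 <= c)%R -> (forall x, ~ N x -> f x <= c%:E) ->
  \int[mu]_x f x <= c%:E * mu setT.
Proof.
move=> f0 mN N0 c0 fc; rewrite ge0_integralTE//.
apply: ge_ereal_sup => _ [h hf <-].
have := @integral_nnsfun _ _ _ mu _ measurableT h.
rewrite patch_setT => <-.
rewrite -integral_cst//.
apply: ae_ge0_le_integral => //.
- by move=> x _; change (0%:E <= (h x)%:E); rewrite lee_fin; exact: fun_ge0.
- apply/measurable_EFinP; exact: measurable_funPT.
- exists N; split => // x /= Hx; apply: contrapT => Nx; apply: Hx => _.
  exact: le_trans (hf x) (fc _ Nx).
Qed.
End intlem.

Theorem theorem7 (R : realType) (d : nat) (hd : (0 < d)%N)
  (phi1 phi2 : R -> \bar R)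
  (hphi1 : entropy_function phi1) (hphi2 : entropy_function phi2)
  (sigma : probability (Rd R d) R) (hsigma : uniform_on_sphere sigma)
  (X : set 'rV[R]_d) (hXc : compact X)
  (r : R) (hXr : forall x, X x -> enorm x <= r)
  (alpha beta : {finite_measure set (Rd R d) -> \bar R})
  (halpha : alpha (~` (X : set (Rd R d))) = 0%E)
  (hbeta : beta (~` (X : set (Rd R d))) = 0%E)
  (p : R) (hp : 1 <= p) :
  (USOT p sigma phi1 phi2 alpha beta <= UOT p phi1 phi2 alpha beta)%E.
Proof.
apply: le_ereal_inf_tmp => _ [pi ->].
set C := (\int[pi]_z ((enorm (z.1 - z.2)) `^ p)%:E)%E.
have mfst : measurable_fun setT (@fst (Rd R d) (Rd R d)) := measurable_fst.
have msnd : measurable_fun setT (@snd (Rd R d) (Rd R d)) := measurable_snd.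
pose pi1 := fpush pi mfst.
pose pi2 := fpush pi msnd.
have e1 : (pi1 : set _ -> _) = (fun A => pi (A `*` setT)).
  apply: funext => A; rewrite /= /fpush; congr (pi _).
  by apply/seteqP; split => z /=; [move=> ?; split|case].
have e2 : (pi2 : set _ -> _) = (fun A => pi (setT `*` A)).
  apply: funext => A; rewrite /= /fpush; congr (pi _).
  by apply/seteqP; split => z /=; [move=> ?; split|case].
apply: (@le_trans _ _ (SOT p sigma pi1 pi2 + divergence phi1 pi1 alpha
     + divergence phi2 pi2 beta)%E).
  by apply: ereal_inf_lbound; exists pi1, pi2.
rewrite e1 e2; apply: leeD2r; apply: leeD2r.
have p0 : 0 <= p by apply: le_trans hp.
have C0 : (0 <= C)%E by apply: integral_ge0 => z _; rewrite lee_fin powR_ge0.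
case Cc: (C) => [c||]; last by rewrite Cc in C0.
  2: exact: leey.
have c0 : 0 <= c by rewrite -lee_fin -Cc.
rewrite /SOT.
apply: le_trans (@ae_le_cst _ _ _ sigma _ (~` (@sphere R d : set (Rd R d))) c _ _ _ c0 _) _.
- move=> t; apply: le_ereal_inf_tmp => _ [g [_ ->]].
  by apply: integral_ge0 => z _; rewrite lee_fin powR_ge0.
- exact: measurableC (meas_sphere R d).
- exact: hsigma.1.
2: { have E : (c%:E * sigma setT = c%:E)%E by rewrite probability_setT mule1.
   by move/eqP: E; rewrite eq_le => /andP[]. }
move=> t /contrapT St.
have mphi : measurable_fun setT (fun z : Rd R d * Rd R d => (dotp t z.1, dotp t z.2)).
  apply: measurable_fun_pair.
    exact: measurableT_comp (meas_dotp R d t) measurable_fst.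
  exact: measurableT_comp (meas_dotp R d t) measurable_snd.
pose gamma := fpush pi mphi.
have mcost : measurable_fun setT (fun z : R * R => ((`|z.1 - z.2|) `^ p)%:E).
  apply/measurable_EFinP; apply: measurableT_comp (measurable_powR p) _.
  have h1 : measurable_fun setT (fun z : R * R => z.1 - z.2).
    exact: measurable_funB measurable_fst measurable_snd.
  have h2 : measurable_fun setT (@Num.norm R R) by exact: normr_measurable.
  exact: measurableT_comp h2 h1.
apply: (@le_trans _ _ (\int[gamma]_z ((`|z.1 - z.2|) `^ p)%:E)%E).
  apply: ereal_inf_lbound; exists gamma; split; last by [].
  move=> A mA; split; rewrite /= /fpush /proj_push; congr (pi _);
    by apply/seteqP; split => z /=; [move=> [] ? _; split|move=> [] ? _; split].
have E : (\int[gamma]_z ((`|z.1 - z.2|) `^ p)%:E =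
  \int[pi]_(x in (fun z : Rd R d * Rd R d => (dotp t z.1, dotp t z.2)) @^-1` setT)
     ((fun z : R * R => ((`|z.1 - z.2|) `^ p)%:E) \o
      (fun z : Rd R d * Rd R d => (dotp t z.1, dotp t z.2))) x)%E.
  exact: (ge0_integral_pushforward mphi pi measurableT mcost).
rewrite E preimage_setT -Cc.
apply: le_int_any.
  by move=> z; rewrite lee_fin powR_ge0.
move=> z /=; rewrite lee_fin dotpB.
apply: ge0_ler_powR => //.
- by rewrite nnegrE; exact: sqrtr_ge0.
exact: cs_sphere.
Qed.
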